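(* Let $\mathbb{K}\in\{\mathbb{R},\mathbb{C}\}$. Suppose $U=[U_1\ \cdots\ U_M]$, where each $U_i$ is a submatrix whose columns come from $S_i$, with $S_1,\dots,S_M$ independent subspaces of $\mathbb{K}^m$, and the columns of $U_i$ are generic for $S_i$. Suppose $P\in\mathbb{K}^{r\times m}$ with $r\ge\operatorname{rank}(U)$ is a row selection matrix such that $\operatorname{rank}(PU)=\operatorname{rank}(U)$. Then the subspaces $P(S_1),\dots,P(S_M)$ are independent.
   Context: Subspaces $S_1,\dots,S_M$ are independent if $\dim(S_1+\dots+S_M)=\dim S_1+\dots+\dim S_M$ (and this is at most the ambient dimension). A set of vectors from a $d$-dimensional subspace $S$ is generic if it has more than $d$ elements and every $d$ of them form a basis of $S$. A row selection matrix is a matrix whose rows are distinct standard basis row vectors, so that $PU$ consists of a subset of the rows of $U$. *)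

(* Defs.v *)
From HB Require Import structures.
From mathcomp Require Import all_boot all_order all_algebra.
Set Implicit Arguments. Unset Strict Implicit. Unset Printing Implicit Defensive.
Import GRing.Theory.
Local Open Scope ring_scope.

(* Convention: a subspace of K^n is represented (as in mxalgebra) by the row
   space of a matrix with n columns; a vector of K^n is a row vector 'rV_n.
   The columns of a matrix U are the vectors (col j U)^T. *)

Definition subspaces_independent (K : fieldType) (M p n : nat)
  (S : 'I_M -> 'M[K]_(p, n)) : Prop :=
  \rank (\sum_(i < M) <<S i>>)%MS = (\sum_(i < M) \rank (S i))%N.

Definition generic_cols (K : fieldType) (m k : nat)
  (A : 'M[K]_(m, k)) (S : 'M[K]_m) : Prop :=
  [/\ forall j : 'I_k, ((col j A)^T <= S)%MS,
      (\rank S < k)%N &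
      forall f : 'I_(\rank S) -> 'I_k, injective f ->
        (((colsub f A)^T == S)%MS && row_free (colsub f A)^T)].

Definition row_selection (K : fieldType) (r m : nat) (P : 'M[K]_(r, m)) : Prop :=
  (forall i : 'I_r, exists j : 'I_m, row i P = delta_mx 0 j) /\
  injective (fun i : 'I_r => row i P).

(* Main.v *)
Require Import Defs.
From HB Require Import structures.
From mathcomp Require Import all_boot all_order all_algebra.
Import GRing.Theory.
Local Open Scope ring_scope.

Lemma gen_cols_eq (K : fieldType) (m k : nat) (A : 'M[K]_(m, k)) (S : 'M[K]_m) :
  generic_cols A S -> (A^T == S)%MS.
Proof.
case=> H1 H2 H3; apply/andP; split.
  by apply/row_subP => j; rewrite -tr_col.
have inj : injective (widen_ord (ltnW H2)) by move=> a b h; apply/val_inj; exact: (congr1 val h).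
have := H3 _ inj.
case/andP => /andP [_ H] _; apply: submx_trans H _.
have -> : (colsub (widen_ord (ltnW H2)) A)^T = rowsub (widen_ord (ltnW H2)) A^T.
  by apply/matrixP => i j; rewrite !mxE.
exact: rowsub_sub.
Qed.

Lemma rank_sum_le (K : fieldType) (M p n : nat) (A : 'I_M -> 'M[K]_(p, n)) :
  (\rank (\sum_(i < M) <<A i>>)%MS <= \sum_(i < M) \rank (A i))%N.
Proof.
elim/big_ind2: _ => //.
- by rewrite mxrank0.
- move=> x1 x2 y1 y2 h1 h2; apply: leq_trans (mxrank_adds_leqif _ _).1 _.
  exact: leq_add.
- by move=> i _; rewrite genmxE.
Qed.

Theorem lemma3 (K : fieldType) (m M r : nat) (S : 'I_M -> 'M[K]_m)
  (n : 'I_M -> nat) (Ui : forall i : 'I_M, 'M[K]_(m, n i))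
  (P : 'M[K]_(r, m)) :
  subspaces_independent S ->
  (forall i : 'I_M, generic_cols (Ui i) (S i)) ->
  row_selection P ->
  (\rank (\mxrow_(i < M) Ui i) <= r)%N ->
  \rank (P *m \mxrow_(i < M) Ui i) = \rank (\mxrow_(i < M) Ui i) ->
  subspaces_independent (fun i : 'I_M => S i *m P^T).
Proof.
rewrite /subspaces_independent => Hind Hgen _ _ Hrk.
set U := \mxrow_(i < M) Ui i in Hrk *.
have HU : (U^T :=: \sum_(i < M) <<S i>>)%MS.
  rewrite /U tr_mxrow; apply: eqmx_trans (eqmx_col _) _.
  have e : forall i, <<(Ui i)^T>>%MS = <<S i>>%MS.
    by move=> i; apply/genmxP; apply: gen_cols_eq.
  under eq_bigr do rewrite e.
  exact: eqmx_refl.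
have E : \rank (\sum_(i < M) <<S i *m P^T>>)%MS = \rank U.
  rewrite -Hrk -[\rank (P *m U)]mxrank_tr trmx_mul.
  rewrite (eqmxMr _ HU) sumsmxMr_gen.
  congr (\rank _); apply: eq_bigr => i _; apply: eq_genmx.
  by apply: eqmx_sym; apply: eqmxMr; apply: genmxE.
apply/eqP; rewrite eqn_leq; apply/andP; split. exact: rank_sum_le.
rewrite E -mxrank_tr HU Hind.
by apply: leq_sum => i _; apply: mxrankM_maxl.
Qed.
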